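(* Let $\lambda_\operatorname{loc} \geq 0$ be a constant and $X$ be a $(s,k,K)$-two layer system such that all the links are $\lambda_\operatorname{loc}$-expanders. Also, let $A \subseteq E$ be a non-empty set, $0< \mu <1$ be a constant and $U \subseteq V_{\mu \text{-small}}$ be a set. Then $$(s-1) \left(\lambda_\operatorname{loc} + \mu \right) \sum_{i=1}^k i w (A_U^i) \geq \sum_{v \in U} m_v (A_v,A_v).$$
   Context: A $(s,k,K)$-two layer system is $X=(V,E,T)$ where $V$ is a finite set, $E \subseteq 2^V$ with $|\tau|=k$ for all $\tau\in E$ and $\bigcup_{\tau\in E}\tau = V$, $T\subseteq 2^E$ with $|\sigma|=K$ for all $\sigma\in T$ and $\bigcup_{\sigma\in T}\sigma=E$; writing $v\in\sigma$ if $v\in\tau$ for some $\tau\in\sigma$, one has $2\le |\{\tau\in\sigma : v\in\tau\}|\le s$ for every $\sigma\in T$ and $v\in\sigma$. A positive weight $w:T\to\mathbb{R}_+$ is fixed and extended by $w(\tau)=\sum_{\sigma\in T,\tau\in\sigma} w(\sigma)$ for $\tau\in E$, and $w(A)=\sum_{\eta\in A} w(\eta)$ for sets $A$. For $v\in V$, the link $X_v$ is the weighted graph with vertex set $E_v=\{\tau\in E: v\in\tau\}$, edges $\{\tau_1,\tau_2\}$ with $\tau_1\neq\tau_2$ in $E_v$ and some $\sigma\in T$ containing both, and edge weight $m_v(\{\tau_1,\tau_2\})=\sum_{\sigma\in T,\tau_1,\tau_2\in\sigma} w(\sigma)$; for a vertex $\tau$, $m_v(\tau)$ is the sum of the weights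 of the edges containing $\tau$, $m_v(B)=\sum_{\tau\in B} m_v(\tau)$, and $m_v(B_1,B_2)=\sum_{(\tau_1,\tau_2)\in B_1\times B_2,\ \{\tau_1,\tau_2\}\text{ an edge}} m_v(\{\tau_1,\tau_2\})$. For $A\subseteq E$, $A_v = A\cap E_v$, and for $U\subseteq V$, $A_U^i=\{\tau\in A : |U\cap\tau| = i\}$. A vertex $v$ is $\mu$-small with respect to $A$ if $m_v(A_v)/m_v(E_v)<\mu$, and $V_{\mu\text{-small}}$ is the set of such vertices. A weighted graph $G$ with vertex set $W$ and weight $m$ is a $\lambda$-expander if $1-h_G\le\lambda$, where $h_G=\min_{\emptyset\neq U'\subsetneqq W} \frac{m(U',W\setminus U')\,m(W)}{m(U')\,m(W\setminus U')}$. *)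

(* Defs.v *)
From mathcomp Require Import all_boot all_order all_algebra.
Set Implicit Arguments. Unset Strict Implicit. Unset Printing Implicit Defensive.
Import Order.TTheory GRing.Theory Num.Theory.
Local Open Scope ring_scope.

Section TwoLayer.
Variables (R : realFieldType) (V : finType).
Implicit Types (E A B : {set {set V}}) (T : {set {set {set V}}})
  (w : {set {set V}} -> R) (v : V) (tau : {set V}) (sigma : {set {set V}}).

(* v \in sigma in the paper's sense: v lies in some tau in sigma *)
Definition vin v sigma := [exists tau in sigma, v \in tau].

(* (s,k,K)-two layer system; the vertex set V is the whole finite type *)
Definition two_layer (s k K : nat) E T :=
  [/\ (forall tau, tau \in E -> #|tau| = k),
      \bigcup_(tau in E) tau = [set: V],
      (forall sigma, sigma \in T -> sigma \subset E /\ #|sigma| = K),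
      \bigcup_(sigma in T) sigma = E &
      (forall sigma v, sigma \in T -> vin v sigma ->
          (2 <= #|[set tau in sigma | v \in tau]| <= s)%N)].

Definition wE T w tau := \sum_(sigma in T | tau \in sigma) w sigma.
Definition wset T w A := \sum_(tau in A) wE T w tau.

Definition Ev E v := [set tau in E | v \in tau].
Definition is_edge E T v tau1 tau2 :=
  [&& tau1 \in Ev E v, tau2 \in Ev E v, tau1 != tau2 &
      [exists sigma in T, (tau1 \in sigma) && (tau2 \in sigma)]].
Definition medge T w tau1 tau2 :=
  \sum_(sigma in T | (tau1 \in sigma) && (tau2 \in sigma)) w sigma.
Definition mvert E T w v tau :=
  \sum_(tau' | is_edge E T v tau tau') medge T w tau tau'.
Definition mset E T w v B := \sum_(tau in B) mvert E T w v tau.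
Definition mpair E T w v B1 B2 :=
  \sum_(tau1 in B1) \sum_(tau2 in B2 | is_edge E T v tau1 tau2) medge T w tau1 tau2.

Definition cut_ratio E T w v U' :=
  mpair E T w v U' (Ev E v :\: U') * mset E T w v (Ev E v)
  / (mset E T w v U' * mset E T w v (Ev E v :\: U')).

(* X_v is a lam-expander: 1 - h_{X_v} <= lam, where h is the minimum of
   cut_ratio over nonempty proper subsets U' of E_v; i.e. 1 - ratio <= lam
   for every such U' *)
Definition link_expander (lam : R) E T w v :=
  forall U' : {set {set V}}, U' \subset Ev E v -> U' != set0 -> U' != Ev E v ->
    1 - cut_ratio E T w v U' <= lam.

Definition mu_small (mu : R) E T w A v :=
  mset E T w v (A :&: Ev E v) / mset E T w v (Ev E v) < mu.

Definition AUi A (U : {set V}) (i : nat) := [set tau in A | #|U :&: tau| == i].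

End TwoLayer.

(* Main.v *)
Require Import Defs.
From mathcomp Require Import all_boot all_order all_algebra.
From mathcomp Require Import ring lra.
Import Order.TTheory GRing.Theory Num.Theory.
Local Open Scope ring_scope.

Section L.
Variables (R : realFieldType) (V : finType) (E : {set {set V}}) (T : {set {set {set V}}}) (w : {set {set V}} -> R).
Hypothesis wpos : forall sigma, sigma \in T -> 0 < w sigma.

Lemma medge_ge0 t1 t2 : 0 <= medge T w t1 t2.
Proof. apply: sumr_ge0 => s /andP[/wpos /ltW] //. Qed.

Lemma mvert_ge0 v t : 0 <= mvert E T w v t.
Proof. apply: sumr_ge0 => *; exact: medge_ge0. Qed.

Lemma mset_ge0 v B : 0 <= mset E T w v B.
Proof. apply: sumr_ge0 => *; exact: mvert_ge0. Qed.

Lemma mpair_ge0 v B1 B2 : 0 <= mpair E T w v B1 B2.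
Proof. apply: sumr_ge0 => *; apply: sumr_ge0 => *; exact: medge_ge0. Qed.

Lemma mpair_split {v} {S : {set {set V}}} : S \subset Ev E v ->
  mpair E T w v S S + mpair E T w v S (Ev E v :\: S) = mset E T w v S.
Proof.
move=> sS; rewrite /mpair /mset -big_split; apply: eq_bigr => t tS /=.
rewrite /mvert [RHS](bigID (mem S)) /=; congr (_ + _); apply: eq_bigl => t'.
  by rewrite andbC.
rewrite in_setD; case: (boolP (is_edge E T v t t')) => e; last by rewrite !andbF.
move: (e) => /and4P[_ -> _ _]; by rewrite andbT andbT.
Qed.

Lemma mset_split {v} {S : {set {set V}}} : S \subset Ev E v ->
  mset E T w v (Ev E v) = mset E T w v S + mset E T w v (Ev E v :\: S).
Proof. by move=> sS; rewrite /mset (big_setID S) (setIidPr sS). Qed.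

Lemma per_v (lam mu : R) (A : {set {set V}}) v :
  0 <= lam -> 0 < mu -> mu < 1 -> link_expander lam E T w v ->
  mu_small mu E T w A v ->
  mpair E T w v (A :&: Ev E v) (A :&: Ev E v) <= (lam + mu) * mset E T w v (A :&: Ev E v).
Proof.
move=> l0 m0 m1 LE MS.
set S := A :&: Ev E v.
have sS : S \subset Ev E v by rewrite subsetIr.
have spl := mpair_split sS; have msp := mset_split sS.
move: MS; rewrite /mu_small -/S => MS.
have c0 := mpair_ge0 v S (Ev E v :\: S).
have b0 := mpair_ge0 v S S.
have a0 := mset_ge0 v S.
have m'0 := mset_ge0 v (Ev E v :\: S).
set a := mset E T w v S in spl msp a0 MS *.
set b := mpair E T w v S S in spl b0 *.
set c := mpair E T w v S (Ev E v :\: S) in spl c0 *.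
set m' := mset E T w v (Ev E v :\: S) in msp m'0 *.
set M := mset E T w v (Ev E v) in msp MS *.
have [a0e|apos] := eqVneq a 0; first by rewrite a0e mulr0; lra.
have {}apos : 0 < a by rewrite lt_def apos.
have [m'0e|m'pos] := eqVneq m' 0.
  by move: MS; rewrite msp m'0e addr0 divff ?(gt_eqF apos) //; lra.
have {}m'pos : 0 < m' by rewrite lt_def m'pos.
have Mpos : 0 < M by lra.
have S0 : S != set0.
  by apply/negP => /eqP S0; move: apos; rewrite /a S0 /mset big_set0 ltxx.
have SE : S != Ev E v.
  apply/negP => /eqP SE; move: m'pos; rewrite /m' SE setDv /mset big_set0 ltxx //.
have := LE S sS S0 SE; rewrite /cut_ratio -/a -/c -/M -/m' => H.
have H2 : (1 - lam) * (a * m') <= c * M.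
  rewrite -ler_pdivlMr ?mulr_gt0 //; lra.
have aM : a < mu * M by rewrite -ltr_pdivrMr.
suff : b * M <= (lam + mu) * a * M by rewrite ler_pM2r.
have h1 : a * a <= mu * M * a by rewrite ler_pM2r //; exact: ltW.
have h2 : 0 <= lam * (a * a) by apply: mulr_ge0 => //; apply: mulr_ge0; exact: ltW.
have h3 : b * M = a * M - c * M by rewrite -spl; ring.
rewrite h3; move: h1 H2; rewrite msp => h1 H2; nra.
Qed.
Lemma mvert_le s k K v t : two_layer s k K E T -> t \in E -> v \in t ->
  mvert E T w v t <= (s%:R - 1) * wE T w t.
Proof.
move=> [_ _ _ _ Hs] tE vt.
rewrite /mvert /medge.
rewrite (exchange_big_dep (fun sg => (sg \in T) && (t \in sg))) /=; last first.
  by move=> t' sg _ /andP[-> /andP[-> _]].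
rewrite /wE mulr_sumr; apply: ler_sum => sg /andP[sgT tsg].
have -> : \sum_(t' | is_edge E T v t t' && ((sg \in T) && ((t \in sg) && (t' \in sg)))) w sg
   = \sum_(t' in [set t' | is_edge E T v t t' && (t' \in sg)]) w sg.
  by apply: eq_bigl => t'; rewrite inE sgT tsg.
rewrite sumr_const [leRHS]mulrC -[w sg *+ _]mulr_natr; apply: ler_wpM2l; first exact: ltW (wpos _ sgT).
set B := [set t' in sg | v \in t'].
have vin : vin v sg by apply/existsP; exists t; rewrite tsg vt.
have /andP[_ Bs] := Hs sg v sgT vin.
have c1 : (#|[set t' | is_edge E T v t t' && (t' \in sg)]| <= #|B :\ t|)%N.
  apply: subset_leq_card; apply/subsetP => t'; rewrite !inE => /andP[e t'sg].
  move: e => /and4P[_ ev ne _]; rewrite inE in ev; case/andP: ev => _ vt'.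
  by rewrite eq_sym ne t'sg vt'.
have c2 : #|B| = (#|B :\ t|).+1 by rewrite (cardsD1 t B) inE tsg vt.
have c3 : (#|[set t' | is_edge E T v t t' && (t' \in sg)]|.+1 <= s)%N.
  by apply: leq_trans Bs; rewrite c2 ltnS.
rewrite lerBrDr natr1 ler_nat //.
Qed.
End L.

Lemma ident (R : realFieldType) (V : finType) s k K (E : {set {set V}}) (T : {set {set {set V}}})
  (A : {set {set V}}) (U : {set V}) (f : {set V} -> R) :
  two_layer s k K E T -> A \subset E ->
  \sum_(v in U) \sum_(t in A :&: Ev E v) f t =
  \sum_(1 <= i < k.+1) i%:R * \sum_(t in AUi A U i) f t.
Proof.
move=> [Hk _ _ _ _] AE.
transitivity (\sum_(v in U) \sum_(t in A | v \in t) f t).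
  apply: eq_bigr => v _; apply: eq_bigl => t; rewrite !inE.
  by case tA: (t \in A) => //=; rewrite (subsetP AE t tA).
rewrite (exchange_big_dep (mem A)) /=; last by move=> v t _ /andP[].
transitivity (\sum_(t in A) f t *+ #|U :&: t|).
  apply: eq_bigr => t tA; rewrite -sumr_const; apply: eq_bigl => v.
  by rewrite !inE tA.
transitivity (\sum_(0 <= i < k.+1) i%:R * \sum_(t in AUi A U i) f t); last first.
  by rewrite [LHS]big_ltn //= mul0r add0r.
rewrite big_mkord.
transitivity (\sum_(i < k.+1) \sum_(t in A) (if #|U :&: t| == i then i%:R * f t else 0)); last first.
  apply: eq_bigr => i _; rewrite mulr_sumr -big_mkcondr; apply: eq_bigl => t.
  by rewrite /AUi inE.
rewrite exchange_big /=; apply: eq_bigr => t tA.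
have hn : (#|U :&: t| < k.+1)%N.
  by rewrite ltnS -(Hk t (subsetP AE t tA)) subset_leq_card // subsetIr.
rewrite -big_mkcond (big_pred1 (Ordinal hn)) /=; first by rewrite mulr_natl.
by move=> i; rewrite /= -val_eqE /= eq_sym.
Qed.

Theorem lemma4p10 (R : realFieldType) (V : finType) (s k K : nat)
  (E : {set {set V}}) (T : {set {set {set V}}}) (w : {set {set V}} -> R)
  (lam mu : R) (A : {set {set V}}) (U : {set V}) :
  two_layer s k K E T ->
  (forall sigma, sigma \in T -> 0 < w sigma) ->
  0 <= lam ->
  (forall v : V, link_expander lam E T w v) ->
  A \subset E -> A != set0 ->
  0 < mu -> mu < 1 ->
  U \subset [set v | mu_small mu E T w A v] ->
  (s%:R - 1) * (lam + mu) * (\sum_(1 <= i < k.+1) i%:R * wset T w (AUi A U i))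
    >= \sum_(v in U) mpair E T w v (A :&: Ev E v) (A :&: Ev E v).
Proof.
move=> TL wpos l0 LE AE _ m0 m1 HU.
have lm0 : 0 <= lam + mu by apply: addr_ge0 => //; exact: ltW.
apply: (@le_trans _ _ (\sum_(v in U) (lam + mu) * mset E T w v (A :&: Ev E v))).
  apply: ler_sum => v vU; apply: per_v => //.
  by move: (subsetP HU v vU); rewrite inE.
rewrite -mulr_sumr.
apply: (@le_trans _ _ ((lam + mu) * \sum_(v in U) ((s%:R - 1) * \sum_(t in A :&: Ev E v) wE T w t))).
  apply: ler_wpM2l => //; apply: ler_sum => v _.
  rewrite /mset mulr_sumr; apply: ler_sum => t; rewrite !inE => /andP[_ /andP[tE vt]].
  exact: (@mvert_le _ _ _ _ _ wpos _ _ _ _ _ TL tE vt).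
rewrite -mulr_sumr (@ident _ _ _ _ _ _ _ _ _ (wE T w) TL AE).
rewrite /wset le_eqVlt; apply/orP; left; apply/eqP; ring.
Qed.
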